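(* For every finitely generated squarefree $\mathbb{N}^n$-graded $S$-module $M$, its coarse Hilbert series satisfies \[ H(M,t)=\sum_{\sigma\subseteq[n]}\dim_{\mathbb{k}} M_\sigma\, H(N_{|\sigma|},t)=\sum_{\sigma\subseteq[n]}\dim_{\mathbb{k}} M_\sigma\,\frac{t^{|\sigma|}}{(1-t)^{|\sigma|}}, \] where $M_\sigma$ is the component of $M$ in degree equal to the $0/1$-indicator vector of $\sigma$. In particular, the cone of Hilbert series of squarefree $S$-modules is simplicial and its extremal rays are spanned by $H(N_\ell,t)=t^\ell/(1-t)^\ell$ for $0\le \ell\le n$.
   Context: $S=\mathbb{k}[x_1,\dots,x_n]$, fine $\mathbb{N}^n$-grading. An $\mathbb{N}^n$-graded $S$-module $M$ is squarefree if for every $a\in\mathbb{N}^n$ and $i$ with $a_i\neq0$, multiplication $x_i:M_a\to M_{a+e_i}$ is bijective. The coarse Hilbert series is $H(M,t)=\sum_{i\ge0}\dim_{\mathbb{k}}M_i t^i$ with $M_i=\bigoplus_{|a|=i}M_a$. For $0\le\ell\le n$, $N_\ell$ denotes the squarefree module with $N_a\cong\mathbb{k}$ when $\mathrm{supp}(a)=[\ell]=\{1,\dots,\ell\}$ and $N_a=0$ otherwise; its Hilbert series is $t^\ell/(1-t)^\ell$. The cone of Hilbert series of squarefree modules is the convex cone in $\mathbb{R}[[t]]$ spanned by the Hilbert series of all finitely generated squarefree $S$-modules. *)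

(* Defs.v *)
From HB Require Import structures.
From mathcomp Require Import all_boot all_order all_algebra.
From mathcomp Require Import mpoly.
From Stdlib Require Import ClassicalEpsilon.

Set Implicit Arguments.
Unset Strict Implicit.
Unset Printing Implicit Defensive.

Import Order.TTheory GRing.Theory Num.Theory.
Local Open Scope ring_scope.

(* S = k[x_1,...,x_n] is {mpoly K[n]}; the fine N^n-grading is indexed *)
(* by monomials 'X_{1..n} (exponent vectors a in N^n).                 *)

Record gmod (K : fieldType) (n : nat) := GMod {
  gm_car : lmodType {mpoly K[n]};
  gm_comp : 'X_{1..n} -> {pred gm_car}
}.
Arguments gm_car {K n} g.
Arguments gm_comp {K n} g a.

Section GradedModules.
Variables (K : fieldType) (n : nat).
Implicit Types (M : gmod K n).

Definition is_graded M : Prop :=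
  [/\ (forall a, (0 : gm_car M) \in gm_comp M a),
      (forall a (u v : gm_car M), u \in gm_comp M a -> v \in gm_comp M a ->
          u + v \in gm_comp M a),
      (forall a (c : K) (u : gm_car M), u \in gm_comp M a ->
          c%:MP *: u \in gm_comp M a),
      (forall a b (u : gm_car M), u \in gm_comp M a ->
          'X_[b] *: u \in gm_comp M (a + b)%MM) &
   [/\ (forall v : gm_car M, exists (s : seq 'X_{1..n}) (f : 'X_{1..n} -> gm_car M),
          [/\ uniq s, (forall a, f a \in gm_comp M a) & v = \sum_(a <- s) f a]) &
      (forall (s : seq 'X_{1..n}) (f : 'X_{1..n} -> gm_car M),
          uniq s -> (forall a, f a \in gm_comp M a) ->
          \sum_(a <- s) f a = 0 -> forall a, a \in s -> f a = 0)]].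

Definition is_fg M : Prop :=
  exists gens : seq (gm_car M), forall v : gm_car M,
    exists p : 'I_(size gens) -> {mpoly K[n]}, v = \sum_(j < size gens) p j *: gens`_j.

Definition is_squarefree M : Prop :=
  forall (a : 'X_{1..n}) (i : 'I_n), a i != 0%N ->
    (forall u v : gm_car M, u \in gm_comp M a -> v \in gm_comp M a ->
        'X_i *: u = 'X_i *: v -> u = v) /\
    (forall w : gm_car M, w \in gm_comp M (a + U_(i))%MM ->
        exists2 u, u \in gm_comp M a & 'X_i *: u = w).

Definition fg_squarefree M : Prop := [/\ is_graded M, is_fg M & is_squarefree M].

Definition is_Kbasis M (P : {pred gm_car M}) (s : seq (gm_car M)) : Prop :=
  [/\ all (mem P) s,
      (forall c : 'I_(size s) -> K,
          \sum_(j < size s) (c j)%:MP *: s`_j = 0 -> forall j, c j = 0) &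
      (forall v, v \in P -> exists c : 'I_(size s) -> K,
          v = \sum_(j < size s) (c j)%:MP *: s`_j)].

Definition has_dimK M (P : {pred gm_car M}) (d : nat) : Prop :=
  exists s, size s = d /\ is_Kbasis P s.

(* dim_k P; only meaningful when P is finite-dimensional (which holds for *)
(* the components of finitely generated graded modules).                 *)
Definition dimK M (P : {pred gm_car M}) : nat :=
  epsilon (inhabits 0%N) (has_dimK P).

Definition dimc M (a : 'X_{1..n}) : nat := dimK (gm_comp M a).

Definition hilb M (i : nat) : nat :=
  (\sum_(a : 'X_{1..n < i.+1} | mdeg a == i) dimc M a)%N.

Definition indic (sigma : {set 'I_n}) : 'X_{1..n} :=
  [multinom (i \in sigma : nat) | i < n].

Definition msupport (a : 'X_{1..n}) : {set 'I_n} := [set i | a i != 0%N].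

End GradedModules.

(* Formal power series in R[[t]], as coefficient sequences.            *)
Definition series (R : Type) := nat -> R.

Definition ps_one (R : ringType) : series R := fun i => (i == 0%N)%:R.
Definition ps_mul (R : ringType) (f g : series R) : series R :=
  fun i => \sum_(j < i.+1) f j * g (i - j)%N.
(* t/(1-t) = t + t^2 + t^3 + ... *)
Definition ps_t_over_1mt (R : ringType) : series R := fun i => (i != 0%N)%:R.
(* t^l/(1-t)^l = (t/(1-t))^l ; this is H(N_l, t) *)
Definition geomS (R : ringType) (l : nat) : series R :=
  iter l (ps_mul (ps_t_over_1mt R)) (ps_one R).

Definition hilbS (R : ringType) (K : fieldType) (n : nat) (M : gmod K n) : series R :=
  fun i => (hilb M i)%:R.

Definition in_sqf_cone (R : realFieldType) (K : fieldType) (n : nat) (f : series R) : Prop :=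
  exists (k : nat) (c : 'I_k -> R) (Ms : 'I_k -> gmod K n),
    [/\ forall j, 0 <= c j,
        forall j, fg_squarefree (Ms j) &
        forall i, f i = \sum_(j < k) c j * hilbS R (Ms j) i].

(* Main.v *)
Require Import Defs.
From HB Require Import structures.
From mathcomp Require Import all_boot all_order all_algebra.
From mathcomp Require Import mpoly.
From mathcomp Require Import zify.
From Stdlib Require Import FunctionalExtensionality PropExtensionality ClassicalEpsilon.
Set Implicit Arguments.
Unset Strict Implicit.
Unset Printing Implicit Defensive.
Import Order.TTheory GRing.Theory Num.Theory.
Local Open Scope ring_scope.


Section Count.
Variable R : ringType.

Lemma geomS0 i : geomS R 0 i = (i == 0%N)%:R.
Proof. by []. Qed.

Lemma geomSS k i : geomS R k.+1 i = \sum_(j < i.+1) ((j : nat) != 0%N)%:R * geomS R k (i - j)%N.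
Proof. reflexivity. Qed.

Variables (n B : nat).
Local Notation FT := {ffun 'I_n -> 'I_B.+1}.
Definition fsupp (f : FT) : {set 'I_n} := [set k | (f k : nat) != 0%N].
Definition fsum (f : FT) : nat := (\sum_k (f k : nat))%N.
Definition fupd (f : FT) x (j : 'I_B.+1) : FT := [ffun k => if k == x then j else f k].

Lemma fsum_upd (f : FT) x j : f x = ord0 -> fsum (fupd f x j) = (fsum f + j)%N.
Proof.
move=> fx; rewrite /fsum (bigD1 x) //= [in RHS](bigD1 x) //= ffunE eqxx fx /=.
rewrite add0n addnC; congr (_ + _)%N; apply: eq_bigr => k kx.
by rewrite ffunE (negbTE kx).
Qed.

Lemma fsupp_upd (f : FT) x j : f x = ord0 ->
  fsupp (fupd f x j) = if (j == 0 :> nat) then fsupp f else x |: fsupp f.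
Proof.
move=> fx; case: ifP => j0; apply/setP => k; rewrite /fsupp !inE ffunE;
  case: (eqVneq k x) => [->|kx]; rewrite ?eqxx ?fx ?j0 //=.
Qed.

Lemma fupd_x (f : FT) x j : fupd f x j x = j.
Proof. by rewrite ffunE eqxx. Qed.

Lemma fupdK (f : FT) x : fupd (fupd f x ord0) x (f x) = f.
Proof. by apply/ffunP => k; rewrite !ffunE; case: eqP => // ->. Qed.

Lemma fupd_eq (f : FT) x j : (fupd (fupd f x j) x ord0 == f) = (f x == ord0).
Proof.
apply/eqP/eqP => [<-|fx]; first by rewrite ffunE eqxx.
by apply/ffunP => k; rewrite !ffunE; case: eqP => // ->.
Qed.

Lemma count_ffun (A : {set 'I_n}) (g : {set 'I_n} -> R) i : (i <= B)%N ->
  \sum_(f : FT | (fsupp f \subset A) && (fsum f == i)) g (fsupp f)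
  = \sum_(s : {set 'I_n} | s \subset A) g s * geomS R #|s| i.
Proof.
move: {2}#|A| (erefl #|A|) => k.
elim: k A g i => [|k IH] A g i hA hi.
  move/eqP: hA; rewrite cards_eq0 => /eqP ->.
  pose f0 : FT := [ffun => ord0].
  rewrite (eq_bigl (fun f => (f == f0) && (i == 0%N))); last first.
    move=> f; rewrite subset0; apply/andP/andP => [[/eqP s0 /eqP <-]|[/eqP -> /eqP ->]].
      have ff : f = f0.
        apply/ffunP => j; rewrite ffunE; apply/val_inj => /=.
        by apply/eqP; apply: contraT => h; move/setP: s0 => /(_ j); rewrite !inE h.
      by rewrite ff eqxx /fsum big1 // => j _; rewrite ffunE.
    split; last by rewrite /fsum big1 // => j _; rewrite ffunE.
    by apply/eqP/setP => j; rewrite !inE ffunE.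
  rewrite (eq_bigl (fun s => s == set0)); last by move=> s; rewrite subset0.
  rewrite big_pred1_eq cards0 geomS0.
  case: (i == 0%N); last by rewrite big_pred0 ?mulr0 // => f; rewrite andbF.
  rewrite (eq_bigl (fun f => f == f0)); last by move=> f; rewrite andbT.
  rewrite big_pred1_eq mulr1; congr (g _); apply/setP => j; rewrite !inE ffunE.
  by [].
have : (0 < #|A|)%N by rewrite hA.
rewrite card_gt0 => /set0Pn [x xA].
set A' := A :\ x.
have hA' : #|A'| = k by move: hA; rewrite (cardsD1 x A) xA add1n => -[].
rewrite (partition_big (fun f : FT => f x) predT) //=.
pose H (j : nat) := \sum_(s : {set 'I_n} | s \subset A')
    g (if j == 0%N then s else x |: s) * geomS R #|s| (i - j)%N.
transitivity (\sum_(j : 'I_B.+1) (if (j <= i)%N then H j else 0)).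
  apply: eq_bigr => j _.
  rewrite (reindex_onto (fun f' => fupd f' x j) (fun f => fupd f x ord0)) /=; last first.
    by move=> f /andP[_ /eqP <-]; rewrite fupdK.
  rewrite (eq_bigl (fun f' => (fsupp f' \subset A') && (fsum f' + j == i)%N)); last first.
    move=> f' /=; rewrite fupd_eq fupd_x eqxx andbT.
    case: (eqVneq (f' x) ord0) => fx; last first.
      rewrite andbF; apply/esym/negbTE; rewrite negb_and; apply/orP; left.
      rewrite /A' subsetD1 negb_and; apply/orP; right.
      by rewrite negbK inE; apply: contra_neq fx => h; apply/val_inj.
    rewrite andbT fsum_upd // fsupp_upd // /A' subsetD1 inE fx eqxx /= andbT.
    by case: ifP => //; rewrite subUset sub1set xA.
  rewrite (eq_bigr (fun f' => g (if (j == 0 :> nat) then fsupp f' else x |: fsupp f'))); last first.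
    move=> f' /andP[hs _]; rewrite fsupp_upd //.
    move: hs; rewrite /A' subsetD1 inE negbK => /andP[_ h].
    by apply/val_inj; apply/eqP.
  case: leqP => ji; last first.
    rewrite big_pred0 // => f'; apply/negbTE; rewrite negb_and; apply/orP; right.
    by rewrite neq_ltn; apply/orP; right; apply: (leq_trans ji); rewrite leq_addl.
  rewrite (eq_bigl (fun f' => (fsupp f' \subset A') && (fsum f' == i - j)%N)); last first.
    by move=> f'; rewrite -[in RHS](eqn_add2r j) subnK.
  rewrite (IH A' (fun s => g (if (j == 0 :> nat) then s else x |: s)) (i - j)%N) //.
  exact: (leq_trans (leq_subr _ _) hi).
rewrite -big_mkcond /=.
have -> : \sum_(j < B.+1 | (j <= i)%N) H j = \sum_(j < i.+1) H j.
  by rewrite (big_ord_widen _ H (_ : i.+1 <= B.+1)%N).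
rewrite big_ord_recl /= {1}/H subn0 /=.
rewrite [RHS](bigID (fun s : {set 'I_n} => x \in s)) /= addrC.
congr (_ + _).
  by apply: eq_bigl => s; rewrite /A' subsetD1.
have hD : forall s' : {set 'I_n}, ((x |: s') :\ x == s') = (x \notin s').
  move=> s'; apply/eqP/idP => [<-|h]; first by rewrite !inE eqxx.
  by rewrite setU1K.
rewrite (reindex_onto (fun s' => x |: s') (fun s => s :\ x)) /=; last first.
  by move=> s /andP[_ xs]; rewrite setD1K.
rewrite [RHS](eq_bigl (fun s' : {set 'I_n} => s' \subset A')); last first.
  move=> s'; rewrite hD setU11 andbT subUset sub1set xA /= /A' subsetD1.
  by [].
rewrite [RHS](eq_bigr (fun s' : {set 'I_n} => g (x |: s') * geomS R #|s'|.+1 i)); last first.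
  move=> s'; rewrite /A' subsetD1 => /andP[_ h]; by rewrite cardsU1 h add1n.
rewrite [RHS](eq_bigr (fun s' : {set 'I_n} => \sum_(j < i) g (x |: s') * geomS R #|s'| (i - j.+1)%N)); last first.
  move=> s' _; rewrite geomSS big_ord_recl /= mul0r add0r mulr_sumr.
  by apply: eq_bigr => j _; rewrite mul1r.
by rewrite [RHS]exchange_big /=.
Qed.
End Count.

Lemma mdeg_ge (n : nat) (m : 'X_{1..n}) k : (m k <= mdeg m)%N.
Proof. by rewrite mdegE (bigD1 k) //= leq_addr. Qed.

Lemma count_mnm (R : ringType) n i (g : {set 'I_n} -> R) :
  \sum_(a : 'X_{1..n < i.+1} | mdeg a == i) g (msupport a)
  = \sum_(s : {set 'I_n}) g s * geomS R #|s| i.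
Proof.
pose m_of (f : {ffun 'I_n -> 'I_i.+1}) : 'X_{1..n} := [multinom (f k : nat) | k < n].
have mdeg_of f : mdeg (m_of f) = fsum f.
  by rewrite mdegE /fsum; apply: eq_bigr => k _; rewrite mnmE.
pose h f : 'X_{1..n < i.+1} := insubd bm0 (m_of f).
pose h' (a : 'X_{1..n < i.+1}) : {ffun 'I_n -> 'I_i.+1} := [ffun k => inord (a k)].
have hh' (a : 'X_{1..n < i.+1}) : m_of (h' a) = a.
  apply/mnmP => k; rewrite mnmE ffunE inordK //.
  exact: (leq_ltn_trans (mdeg_ge a k) (valP a)).
rewrite (reindex_onto h h'); last first.
  move=> a /eqP ha; apply/val_inj; rewrite /h val_insubd hh' /=.
  by rewrite (valP a).
have hval f : (fsum f < i.+1)%N -> (h f : 'X_{1..n}) = m_of f.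
  by move=> hf; rewrite /h val_insubd mdeg_of hf.
rewrite (eq_bigl (fun f => fsum f == i)); last first.
  move=> f; case: (ltnP (fsum f) i.+1) => hf.
    have -> : h' (h f) = f.
      by apply/ffunP => k; rewrite ffunE hval // mnmE inord_val.
    by rewrite eqxx andbT hval // mdeg_of.
  rewrite [RHS](_ : _ = false); last by apply/negbTE; rewrite neq_ltn hf orbT.
  have h0 : (h f : 'X_{1..n}) = 0%MM by rewrite /h val_insubd mdeg_of ltnNge hf.
  rewrite h0 mdeg0.
  apply/negbTE; apply/negP => /andP[/eqP i0 /eqP hf'].
  move: hf; rewrite -hf' /fsum big1 // => k _; rewrite ffunE h0 mnm0E -i0.
  by rewrite inordK.
rewrite (eq_bigr (fun f => g (fsupp f))); last first.
  move=> f /eqP hf; congr g; apply/setP => k.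
  by rewrite /msupport /fsupp !inE hval ?hf // mnmE.
rewrite (eq_bigl (fun f => (fsupp f \subset setT) && (fsum f == i))); last first.
  by move=> f; rewrite subsetT.
rewrite count_ffun //; apply: eq_bigl => s; exact: subsetT.
Qed.


Section Transport.
Variables (K : fieldType) (n : nat) (M : gmod K n).
Local Notation V := (gm_car M).

Definition closedK (P : {pred V}) :=
  [/\ (0 : V) \in P, (forall u v, u \in P -> v \in P -> u + v \in P) &
      (forall (c : K) u, u \in P -> c%:MP *: u \in P)].

Lemma closed_sum (P : {pred V}) k (c : 'I_k -> K) (f : 'I_k -> V) :
  closedK P -> (forall j, f j \in P) -> \sum_(j < k) (c j)%:MP *: f j \in P.
Proof.
case=> P0 PD PZ hf; apply: (big_ind (fun x => x \in P)) => //.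
by move=> j _; apply: PZ.
Qed.

Variables (phi : V -> V)
  (phiD : forall u v, phi (u + v) = phi u + phi v)
  (phiZ : forall (c : K) u, phi (c%:MP *: u) = c%:MP *: phi u).

Lemma phi0 : phi 0 = 0.
Proof. by apply: (@addrI _ (phi 0)); rewrite -phiD !addr0. Qed.

Lemma phi_sum k (c : 'I_k -> K) (f : 'I_k -> V) :
  phi (\sum_(j < k) (c j)%:MP *: f j) = \sum_(j < k) (c j)%:MP *: phi (f j).
Proof.
rewrite (big_morph phi phiD phi0); apply: eq_bigr => j _; exact: phiZ.
Qed.

Lemma lift_seq (P Q : {pred V}) :
  (forall w, w \in Q -> exists2 u, u \in P & phi u = w) ->
  forall t : seq V, all (mem Q) t -> exists s, all (mem P) s /\ map phi s = t.
Proof.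
move=> surj; elim=> [|w t IH] /=; first by exists [::].
case/andP => /surj [u uP <-] /IH [s [sP <-]].
by exists (u :: s) => /=; rewrite uP sP.
Qed.

Lemma sum_cast (m m' : nat) (e : m = m') (F : 'I_m' -> V) :
  \sum_(j < m') F j = \sum_(j < m) F (cast_ord e j).
Proof. by case: m' / e F => F; apply: eq_bigr => j _; rewrite cast_ord_id. Qed.

Lemma has_dimK_iso (P Q : {pred V}) d :
  closedK P ->
  {in P, forall u, phi u \in Q} ->
  {in P &, injective phi} ->
  (forall w, w \in Q -> exists2 u, u \in P & phi u = w) ->
  has_dimK P d <-> has_dimK Q d.
Proof.
move=> cP PQ inj surj; have P0 : (0 : V) \in P by case: cP.
split.
  case=> s [sd [sP sI sS]]; exists (map phi s); split; first by rewrite size_map.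
  have nthm j : (j < size s)%N -> (map phi s)`_j = phi s`_j.
    by move=> hj; rewrite (nth_map 0).
  pose e := esym (size_map phi s).
  split.
  - by apply/allP => w /mapP [u /(allP sP) uP ->]; exact: PQ.
  - move=> c hc j; rewrite -(cast_ordKV e j); apply: (sI (fun j => c (cast_ord e j))).
    apply: inj => //.
      by apply: closed_sum => // k; apply: (allP sP); apply: mem_nth.
    rewrite phi_sum phi0 -[X in _ = X]hc (sum_cast e); apply: eq_bigr => k _; rewrite nthm //=; exact: ltn_ord.
  - move=> w /surj [u uP <-]; case: (sS u uP) => c ->.
    exists (fun j => c (cast_ord (esym e) j)).
    rewrite phi_sum (sum_cast e); apply: eq_bigr => k _; rewrite cast_ordK nthm //=; exact: ltn_ord.
case=> t [td [tQ tI tS]].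
case: (lift_seq surj tQ) => s [sP st].
have ss : size s = size t by rewrite -st size_map.
have nthm j : (j < size s)%N -> t`_j = phi s`_j.
  by move=> hj; rewrite -st (nth_map 0).
exists s; split; first by rewrite ss.
split => //.
- move=> c hc j; rewrite -(cast_ordK ss j); apply: (tI (fun j => c (cast_ord (esym ss) j))).
  rewrite (sum_cast ss).
  rewrite (eq_bigr (fun j : 'I_(size s) => (c j)%:MP *: phi s`_j)); last first.
    by move=> k _; rewrite cast_ordK nthm //=; exact: ltn_ord.
  by rewrite -(phi_sum (fun j => c j) (fun j : 'I_(size s) => s`_j)) hc phi0.
- move=> u uP; case: (tS (phi u) (PQ u uP)) => c hc.
  exists (fun j => c (cast_ord ss j)); apply: inj => //.
    by apply: closed_sum => // j; apply: (allP sP); apply: mem_nth.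
  rewrite hc phi_sum (sum_cast ss); apply: eq_bigr => j _; rewrite nthm //=; exact: ltn_ord.
Qed.

End Transport.

Section Sqf.
Variables (K : fieldType) (n : nat) (M : gmod K n).
Hypotheses (gM : is_graded M) (sM : is_squarefree M).

Lemma closed_comp a : closedK (gm_comp M a).
Proof. by case: gM => h0 hD hZ _ _; split => [|u v|c u]; [apply: h0|apply: hD|apply: hZ]. Qed.

Lemma step_dim (a : 'X_{1..n}) (i : 'I_n) d : a i != 0%N ->
  has_dimK (gm_comp M a) d <-> has_dimK (gm_comp M (a + U_(i))%MM) d.
Proof.
move=> ai.
apply: (has_dimK_iso (M := M) (phi := fun u : gm_car M => 'X_i *: u)).
- by move=> u v; rewrite scalerDr.
- by move=> c u; rewrite !scalerA mulrC.
- exact: closed_comp.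
- by move=> u uP; case: gM => _ _ _ hX _; apply: hX.
- by move=> u v uP vP; apply: (sM ai).1.
- by move=> w wP; apply: (sM ai).2.
Qed.

Lemma has_dimK_supp (a : 'X_{1..n}) :
  has_dimK (gm_comp M a) = has_dimK (gm_comp M (indic (msupport a))).
Proof.
have [k] := ubnP (mdeg a); elim: k a => // k IH a ha.
case: (boolP [exists j, (1 < a j)%N]) => [/existsP [j hj] | /existsPn hall].
  pose b := (a - U_(j))%MM.
  have ab : a = (b + U_(j))%MM.
    apply/mnmP => x; rewrite mnmDE mnmBE mnm1E; case: eqP => [<-|_].
      by rewrite subn1 addn1 prednK // (leq_trans _ hj).
    by rewrite subn0 addn0.
  have bj : b j != 0%N by rewrite mnmBE mnm1E eqxx subn1 -lt0n -ltnS prednK // (leq_trans _ hj).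
  have sb : msupport b = msupport a.
    apply/setP => x; rewrite !inE mnmBE mnm1E; case: (eqVneq j x) => [<-|ne]; last by rewrite /= subn0.
    rewrite /=.
    by rewrite -!lt0n subn_gt0 hj (ltnW hj).
  have db : (mdeg b < k)%N.
    by move: ha; rewrite ab mdegD mdeg1 addn1 ltnS.
  apply: functional_extensionality => d; apply: propositional_extensionality.
  rewrite -sb -(IH b db) {1}ab; split => h; first by apply/(step_dim d bj).
  exact/(step_dim d bj).
have -> // : indic (msupport a) = a.
apply/mnmP => x; rewrite /indic mnmE inE.
by move: (hall x); rewrite -leqNgt; case: (a x) => [|[]].
Qed.

Lemma dimc_supp (a : 'X_{1..n}) : dimc M a = dimc M (indic (msupport a)).
Proof. by rewrite /dimc /dimK has_dimK_supp. Qed.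

End Sqf.


Definition Ncar (K : fieldType) (n l : nat) := {mpoly K[l]}.
HB.instance Definition _ (K : fieldType) (n l : nat) := GRing.Zmodule.on (Ncar K n l).

Definition psi_t (K : fieldType) (n l : nat) : n.-tuple {mpoly K[l]} :=
  [tuple (if (insub (val i) : option 'I_l) is Some j then 'X_j else 0) | i < n].

Definition psi (K : fieldType) (n l : nat) (p : {mpoly K[n]}) : {mpoly K[l]} :=
  p \mPo psi_t K n l.

Definition Nscale (K : fieldType) (n l : nat) (p : {mpoly K[n]}) (q : Ncar K n l) : Ncar K n l :=
  psi l p * (q : {mpoly K[l]}).

Section NscaleLemmas.
Variables (K : fieldType) (n l : nat).
Lemma Nscale_A a b (v : Ncar K n l) : Nscale a (Nscale b v) = Nscale (a * b) v.
Proof. by rewrite /Nscale /psi rmorphM mulrA. Qed.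
Lemma Nscale_1 : left_id 1 (@Nscale K n l).
Proof. by move=> v; rewrite /Nscale /psi rmorph1 mul1r. Qed.
Lemma Nscale_Dr : right_distributive (@Nscale K n l) +%R.
Proof. by move=> a u v; rewrite /Nscale mulrDr. Qed.
Lemma Nscale_Dl (v : Ncar K n l) : {morph (@Nscale K n l)^~ v : a b / a + b}.
Proof. by move=> a b; rewrite /Nscale /psi rmorphD mulrDl. Qed.
End NscaleLemmas.

HB.instance Definition _ (K : fieldType) (n l : nat) :=
  GRing.Zmodule_isLmodule.Build {mpoly K[n]} (Ncar K n l) (@Nscale_A K n l) (@Nscale_1 K n l)
    (@Nscale_Dr K n l) (@Nscale_Dl K n l).

Section NMod.
Variables (K : fieldType) (n l : nat) (lln : (l <= n)%N).
Local Notation NC := (Ncar K n l).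

Lemma NscaleE (p : {mpoly K[n]}) (q : NC) : p *: q = psi l p * (q : {mpoly K[l]}).
Proof. by []. Qed.

Lemma NscaleC (c : K) (q : NC) : (c%:MP : {mpoly K[n]}) *: q = c%:MP * (q : {mpoly K[l]}).
Proof. by rewrite NscaleE /psi comp_mpolyC. Qed.

Definition restr (b : 'X_{1..n}) : 'X_{1..l} := [multinom b (widen_ord lln j) | j < l].

Lemma psi_tE (i : 'I_n) :
  tnth (psi_t K n l) i = if (insub (val i) : option 'I_l) is Some j then 'X_j else 0.
Proof. by rewrite tnth_mktuple. Qed.

Lemma psiX_in (b : 'X_{1..n}) : (forall i : 'I_n, (l <= i)%N -> b i = 0%N) ->
  psi l ('X_[b] : {mpoly K[n]}) = 'X_[restr b].
Proof.
move=> hb; rewrite /psi comp_mpolyX mpolyXE_id.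
rewrite (bigID (fun i : 'I_n => (i < l)%N)) /= [X in _ * X]big1 ?mulr1; last first.
  by move=> i; rewrite -leqNgt => /hb ->.
rewrite (big_ord_narrow lln); apply: eq_bigr => j _.
rewrite psi_tE /restr mnmE.
by rewrite (_ : insub _ = Some j) //; exact: (valK j).
Qed.

Lemma psiX_out (b : 'X_{1..n}) (i : 'I_n) : (l <= i)%N -> b i != 0%N ->
  psi l ('X_[b] : {mpoly K[n]}) = 0.
Proof.
move=> li bi; rewrite /psi comp_mpolyX (bigD1 i) //= psi_tE insubN -?leqNgt //.
by rewrite expr0n (negbTE bi) mul0r.
Qed.


Definition Lset : {set 'I_n} := [set i : 'I_n | (i < l)%N].
Definition shiftm (a : 'X_{1..n}) : 'X_{1..l} := [multinom (a (widen_ord lln j)).-1 | j < l].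
Definition unshift (b : 'X_{1..l}) : 'X_{1..n} :=
  [multinom (if (insub (val i) : option 'I_l) is Some j then (b j).+1 else 0%N) | i < n].
Definition extm (b : 'X_{1..l}) : 'X_{1..n} :=
  [multinom (if (insub (val i) : option 'I_l) is Some j then b j else 0%N) | i < n].

Lemma insub_w (j : 'I_l) : (insub (val (widen_ord lln j)) : option 'I_l) = Some j.
Proof. exact: (valK j). Qed.

Lemma msupport_unshift b : msupport (unshift b) = Lset.
Proof.
apply/setP => x; rewrite !inE mnmE.
by case: insubP => [j -> _ //| /negbTE ->].
Qed.

Lemma shift_unshift b : shiftm (unshift b) = b.
Proof. by apply/mnmP => j; rewrite !mnmE insub_w. Qed.

Lemma unshift_shift a : msupport a = Lset -> unshift (shiftm a) = a.
Proof.
move=> ha; apply/mnmP => x; rewrite !mnmE.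
case: insubP => [j hx hj | hx].
  rewrite mnmE prednK; first by congr (a _); apply/val_inj; rewrite /= hj.
  have : widen_ord lln j \in msupport a by rewrite ha inE /=.
  by rewrite inE lt0n.
have : x \notin msupport a by rewrite ha inE.
by rewrite inE negbK => /eqP ->.
Qed.

Lemma unshift_inj : injective unshift.
Proof. by move=> b1 b2 h; rewrite -(shift_unshift b1) h shift_unshift. Qed.

Lemma restr_ext b : restr (extm b) = b.
Proof. by apply/mnmP => j; rewrite !mnmE insub_w. Qed.

Lemma ext_out b (i : 'I_n) : (l <= i)%N -> extm b i = 0%N.
Proof. by move=> li; rewrite mnmE insubN // -leqNgt. Qed.

Lemma shiftD a b : msupport a = Lset -> shiftm (a + b)%MM = (shiftm a + restr b)%MM.
Proof.
move=> ha; apply/mnmP => j; rewrite !(mnmE, mnmDE).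
have : widen_ord lln j \in msupport a by rewrite ha inE /=.
by rewrite inE; case: (a _) => [|k].
Qed.

Definition isMon (m : 'X_{1..l}) (q : {mpoly K[l]}) := q == (q@_m)%:MP * 'X_[m].

Lemma isMonP m q : reflect (exists c, q = c%:MP * 'X_[m]) (isMon m q).
Proof.
apply: (iffP eqP) => [->|[c ->]]; first by eexists.
by rewrite mcoeffCM mcoeffX eqxx mulr1.
Qed.

Definition compN (a : 'X_{1..n}) : {pred NC} :=
  [pred q : NC | if msupport a == Lset then isMon (shiftm a) q else q == 0].

Lemma compN0 a : (0 : NC) \in compN a.
Proof.
rewrite inE; case: ifP => // _; apply/isMonP; exists 0; by rewrite mpolyC0 mul0r.
Qed.


Definition NN : gmod K n := @GMod K n _ compN.

Lemma supp_D a (b : 'X_{1..n}) : msupport a = Lset ->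
  (forall i : 'I_n, (l <= i)%N -> b i = 0%N) -> msupport (a + b)%MM = Lset.
Proof.
move=> ha hb; apply/setP => x; rewrite !inE mnmDE.
case: (ltnP x l) => hx.
  have : x \in msupport a by rewrite ha inE.
  by rewrite inE -!lt0n => h; rewrite (leq_trans h) // leq_addr.
have : x \notin msupport a by rewrite ha inE -leqNgt.
by rewrite inE negbK => /eqP ->; rewrite hb.
Qed.

Lemma N_graded1 : forall a (u v : gm_car NN), u \in gm_comp NN a -> v \in gm_comp NN a ->
          u + v \in gm_comp NN a.
Proof.
move=> a u v; rewrite /= !inE; case: ifP => _; last first.
  by move=> /eqP -> /eqP ->; rewrite addr0.
move=> /isMonP [cu ->] /isMonP [cv ->]; apply/isMonP; exists (cu + cv).
by rewrite mpolyCD mulrDl.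
Qed.

Lemma N_graded2 : forall a (c : K) (u : gm_car NN), u \in gm_comp NN a ->
          c%:MP *: u \in gm_comp NN a.
Proof.
move=> a c u; rewrite /= !inE NscaleC; case: ifP => _; last first.
  by move=> /eqP ->; rewrite mulr0.
move=> /isMonP [cu ->]; apply/isMonP; exists (c * cu).
by rewrite mulrA mpolyCM.
Qed.

Lemma N_graded3 : forall a b (u : gm_car NN), u \in gm_comp NN a ->
          'X_[b] *: u \in gm_comp NN (a + b)%MM.
Proof.
move=> a b u; rewrite /= NscaleE.
case: (boolP [forall i : 'I_n, (l <= i)%N ==> (b i == 0%N)]) => [/forallP hb | /forallPn [i]].
  have hb' : forall i : 'I_n, (l <= i)%N -> b i = 0%N by move=> i li; apply/eqP; apply: (implyP (hb i)).
  rewrite psiX_in //; rewrite !inE; case: (eqVneq (msupport a) Lset) => ha; last first.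
    move=> /eqP ->; rewrite mulr0; case: ifP => // _; apply/isMonP; exists 0; by rewrite mpolyC0 mul0r.
  rewrite supp_D // eqxx => /isMonP [cu ->]; apply/isMonP; exists cu.
  by rewrite mulrCA -mpolyXD shiftD // addmC.
rewrite negb_imply => /andP [li bi]; rewrite (psiX_out li bi) mul0r.
by move=> _; apply: compN0.
Qed.


Lemma N_decomp : forall v : gm_car NN, exists (s : seq 'X_{1..n}) (f : 'X_{1..n} -> gm_car NN),
          [/\ uniq s, (forall a, f a \in gm_comp NN a) & v = \sum_(a <- s) f a].
Proof.
move=> v; pose f (a : 'X_{1..n}) : NC :=
  if msupport a == Lset then ((v : {mpoly K[l]})@_(shiftm a))%:MP * 'X_[shiftm a] else 0.
exists (map unshift (msupp (v : {mpoly K[l]}))), f; split.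
- by rewrite map_inj_uniq ?msupp_uniq //; exact: unshift_inj.
- move=> a; rewrite /= inE /f; case: (msupport a == Lset) => //=; apply/isMonP; by eexists.
rewrite big_map {1}[v : {mpoly K[l]}]mpolyE; apply: eq_bigr => m _.
by rewrite /f msupport_unshift eqxx shift_unshift mul_mpolyC.
Qed.

Lemma N_uniq : forall (s : seq 'X_{1..n}) (f : 'X_{1..n} -> gm_car NN),
          uniq s -> (forall a, f a \in gm_comp NN a) ->
          \sum_(a <- s) f a = 0 -> forall a, a \in s -> f a = 0.
Proof.
move=> s f us hf h0 a0 a0s.
have := hf a0; rewrite /= inE; case: (eqVneq (msupport a0) Lset) => h; last by move/eqP.
move/isMonP => [c0 fa0].
suff c00 : c0 = 0 by rewrite fa0 c00 mpolyC0 mul0r.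
have := congr1 (mcoeff (shiftm a0)) h0.
rewrite mcoeff0 raddf_sum (bigD1_seq a0) //= fa0 mcoeffCM mcoeffX eqxx mulr1.
rewrite big_seq_cond big1 ?addr0 // => a /andP [aS ne].
have := hf a; rewrite /= inE; case: (eqVneq (msupport a) Lset) => ha; last first.
  by move/eqP ->; rewrite mcoeff0.
move/isMonP => [c ->]; rewrite mcoeffCM mcoeffX.
case: (eqVneq (shiftm a) (shiftm a0)) => e; last by rewrite mulr0.
by move: ne; rewrite -(unshift_shift ha) -(unshift_shift h) e eqxx.
Qed.

Lemma N_is_graded : is_graded NN.
Proof.
split.
- by move=> a; exact: compN0.
- exact: N_graded1.
- exact: N_graded2.
- exact: N_graded3.
- split; [exact: N_decomp | exact: N_uniq].
Qed.


Lemma Xnz (m : 'X_{1..l}) : ('X_[m] : {mpoly K[l]}) != 0.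
Proof.
apply/eqP => h; have := congr1 (mcoeff m) h.
by rewrite mcoeffX eqxx mcoeff0 => /eqP; rewrite oner_eq0.
Qed.

Definition liftp (v : {mpoly K[l]}) : {mpoly K[n]} :=
  \sum_(m <- msupp v) (v@_m)%:MP * 'X_[extm m].

Lemma psi_liftp v : psi l (liftp v) = v.
Proof.
rewrite /liftp /psi raddf_sum [in RHS](mpolyE v); apply: eq_bigr => m _.
rewrite /= rmorphM /= comp_mpolyC -/(psi l _) psiX_in ?restr_ext ?mul_mpolyC //.
by move=> i li; rewrite ext_out.
Qed.

Lemma N_is_fg : is_fg NN.
Proof.
exists [:: (1 : NC)] => v; exists (fun _ => liftp v).
by rewrite big_ord1 /= NscaleE mulr1 psi_liftp.
Qed.

Lemma supp_DU (a : 'X_{1..n}) (i : 'I_n) : a i != 0%N -> msupport (a + U_(i))%MM = msupport a.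
Proof.
move=> ai; apply/setP => x; rewrite !inE mnmDE mnm1E.
case: (eqVneq i x) => [<-|_]; last by rewrite addn0.
by rewrite ai addn1.
Qed.

Lemma N_is_squarefree : is_squarefree NN.
Proof.
move=> a i ai; rewrite /=.
have sa := supp_DU ai.
case: (ltnP i l) => hi.
  pose j : 'I_l := Ordinal hi.
  have rU : restr U_(i)%MM = U_(j)%MM.
    apply/mnmP => k; rewrite !mnmE; congr (nat_of_bool _).
  have pX : psi l ('X_i : {mpoly K[n]}) = 'X_j.
    rewrite psiX_in ?rU // => k lk; rewrite mnm1E; case: eqP => // e.
    by move: lk; rewrite -e leqNgt hi.
  split.
    move=> u v _ _; rewrite !NscaleE pX; exact: (mulfI (Xnz _)).
  move=> w; rewrite !inE sa; case: (eqVneq (msupport a) Lset) => ha; last first.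
    by move=> /eqP ->; exists 0; [exact: compN0 | rewrite scaler0].
  move=> /isMonP [c ->]; exists (c%:MP * 'X_[shiftm a] : NC).
    by rewrite inE ha eqxx; apply/isMonP; exists c.
  by rewrite NscaleE pX mulrCA -mpolyXD shiftD // rU addmC.
have pX : psi l ('X_i : {mpoly K[n]}) = 0.
  by apply: (psiX_out (i := i)) => //; rewrite mnm1E eqxx.
have ha : msupport a != Lset.
  apply/eqP => /setP /(_ i); rewrite !inE ai ltnNge hi.
  by [].
split.
  by move=> u v; rewrite !inE (negbTE ha) => /eqP -> /eqP ->.
move=> w; rewrite !inE sa (negbTE ha) => /eqP ->.
by exists 0; [exact: compN0 | rewrite scaler0].
Qed.

Lemma N_fg_sqf : fg_squarefree NN.
Proof. split; [exact: N_is_graded | exact: N_is_fg | exact: N_is_squarefree]. Qed.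


Lemma N_dim a : has_dimK (gm_comp NN a) (msupport a == Lset).
Proof.
case: (eqVneq (msupport a) Lset) => ha /=.
  exists [:: ('X_[shiftm a] : NC)]; split => //; split.
  - by rewrite /= inE ha eqxx andbT; apply/isMonP; exists 1; rewrite mpolyC1 mul1r.
  - move=> c; rewrite big_ord1 NscaleC /= => h j; rewrite ord1.
    have := congr1 (mcoeff (shiftm a)) h.
    by rewrite mcoeffCM mcoeffX eqxx mulr1 mcoeff0.
  - move=> v; rewrite inE ha eqxx => /isMonP [c ->]; exists (fun _ => c).
    by rewrite big_ord1 NscaleC.
exists [::]; split => //; split => //.
- by move=> c _ [].
- by move=> v; rewrite inE (negbTE ha) => /eqP ->; exists (fun _ => 0); rewrite big_ord0.
Qed.

Lemma basis_nz (s : seq NC) :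
  (forall c : 'I_(size s) -> K,
          \sum_(j < size s) (c j)%:MP *: s`_j = 0 -> forall j, c j = 0) ->
  forall j : 'I_(size s), s`_j != 0.
Proof.
move=> sI j; apply/eqP => h.
have := sI (fun k => (k == j)%:R); rewrite (bigD1 j) //= big1 ?addr0; last first.
  by move=> k /negbTE ->; rewrite mpolyC0 scale0r.
by rewrite eqxx mpolyC1 scale1r h => /(_ erefl j); rewrite eqxx => /eqP; rewrite oner_eq0.
Qed.

Lemma N_dim_uniq a d : has_dimK (gm_comp NN a) d -> d = (msupport a == Lset).
Proof.
case=> s [<- [sP sI sS]].
have nz := @basis_nz s sI.
have sPj (j : 'I_(size s)) : s`_j \in compN a by apply: (allP sP); apply: mem_nth.
case: (eqVneq (msupport a) Lset) => ha /=; last first.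
  case: (size s) {sP sS} sI nz sPj => // k _ nz sPj.
  by have := sPj ord0; rewrite inE (negbTE ha) (negbTE (nz ord0)).
have Xin : ('X_[shiftm a] : NC) \in compN a.
  by rewrite inE ha eqxx; apply/isMonP; exists 1; rewrite mpolyC1 mul1r.
case hs : (size s) => [|[|k]] //.
  case: (sS _ Xin) => c; move: c; rewrite hs => c; rewrite big_ord0 => /eqP.
  by rewrite (negbTE (Xnz _)).
have h0 : (0 < size s)%N by rewrite hs.
have h1 : (1 < size s)%N by rewrite hs.
have := sPj (Ordinal h0); rewrite inE ha eqxx => /isMonP [b0 /= e0].
have := sPj (Ordinal h1); rewrite inE ha eqxx => /isMonP [b1 /= e1].
pose c' (j : nat) : K := if j == 0%N then b1 else if j == 1%N then - b0 else 0.
have := sI (fun j => c' (val j)).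
have -> : \sum_(j < size s) (c' (val j))%:MP *: s`_j = 0.
  rewrite -(big_mkord xpredT (fun j => (c' j)%:MP *: s`_j)) hs.
  rewrite big_nat_recl // big_nat_recl // big1_seq ?addr0; last first.
    by move=> j _; rewrite /c' /= mpolyC0 scale0r.
  rewrite /c' /= !NscaleC e0 e1 mpolyCN mulNr mulrCA subrr.
  by [].
move=> /(_ erefl (Ordinal h0)) /= b10.
rewrite /c' /= in b10; by move: (nz (Ordinal h1)); rewrite /= e1 b10 mpolyC0 mul0r eqxx.
Qed.

End NMod.

Section Final.

Lemma card_Lset n l (lln : (l <= n)%N) : #|Lset n l| = l.
Proof.
rewrite -sum1_card (eq_bigl (fun i : 'I_n => (i < l)%N)); last by move=> i; rewrite inE.
by rewrite (big_ord_narrow lln) sum1_card card_ord.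
Qed.

Lemma msupport_indic n (s : {set 'I_n}) : msupport (indic s) = s.
Proof. by apply/setP => x; rewrite inE mnmE; case: (x \in s). Qed.

Lemma part1 (K : fieldType) n (R : ringType) (M : gmod K n) : fg_squarefree M ->
  forall i, hilbS R M i = \sum_(s : {set 'I_n}) (dimc M (indic s))%:R * geomS R #|s| i.
Proof.
case=> gM _ sM i; rewrite /hilbS /hilb natr_sum.
rewrite (eq_bigr (fun a : 'X_{1..n < i.+1} => (dimc M (indic (msupport a)))%:R)); last first.
  by move=> a _; rewrite (dimc_supp gM sM).
exact: (count_mnm i (fun s => (dimc M (indic s))%:R)).
Qed.

Lemma dimc_N (K : fieldType) n l (lln : (l <= n)%N) a :
  dimc (NN K lln) a = (msupport a == Lset n l).
Proof.
rewrite /dimc /dimK; apply: N_dim_uniq.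
apply: ClassicalEpsilon.epsilon_spec; exists (msupport a == Lset n l : nat).
exact: N_dim.
Qed.

Lemma hilbS_N (K : fieldType) n l (lln : (l <= n)%N) (R : ringType) i :
  hilbS R (NN K lln) i = geomS R l i.
Proof.
rewrite (part1 _ (N_fg_sqf K lln)) (bigD1 (Lset n l)) //= big1 ?addr0; last first.
  by move=> s /negbTE h; rewrite dimc_N msupport_indic h mul0r.
by rewrite dimc_N msupport_indic eqxx mul1r card_Lset.
Qed.

Lemma geomS_lt (R : ringType) k i : (i < k)%N -> geomS R k i = 0.
Proof.
elim: k i => [//|k IH] i hi; rewrite geomSS big1 // => j _.
case: (eqVneq (j : nat) 0%N) => [->|j0]; first by rewrite mul0r.
rewrite IH ?mulr0 //; rewrite ltnS in hi; rewrite -lt0n in j0.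
have hj := ltn_ord j; lia.
Qed.


Lemma geomS_diag (R : ringType) k : geomS R k k = 1.
Proof.
elim: k => [//|k IH]; rewrite geomSS big_ord_recl /= mul0r add0r.
rewrite big_ord_recl /= mul1r subSS subn0 IH big1 ?addr0 // => j _.
rewrite /= mul1r geomS_lt // /bump /= !add1n; have := ltn_ord j; lia.
Qed.

Lemma regroup n (R : ringType) (F : {set 'I_n} -> R) (G : nat -> R) :
  \sum_(s : {set 'I_n}) F s * G #|s| = \sum_(l < n.+1) (\sum_(s : {set 'I_n} | #|s| == l) F s) * G l.
Proof.
rewrite (partition_big (fun s : {set 'I_n} => (inord #|s| : 'I_n.+1)) xpredT) //=.
apply: eq_bigr => l _; rewrite mulr_suml.
have hs (s : {set 'I_n}) : (#|s| <= n)%N by rewrite -[X in (_ <= X)%N](card_ord n) max_card.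
apply: eq_big => [s|s /eqP <-]; first by rewrite -(inj_eq val_inj) /= inordK // ltnS.
by rewrite inordK // ltnS.
Qed.

End Final.

Theorem theorem4p5 (K : fieldType) (n : nat) (R : realFieldType) :
  (* H(M,t) = sum_sigma dim M_sigma * t^|sigma|/(1-t)^|sigma| *)
  (forall M : gmod K n, fg_squarefree M ->
     forall i : nat,
       hilbS R M i = \sum_(sigma : {set 'I_n}) (dimc M (indic sigma))%:R * geomS R #|sigma| i)
  /\
  (* the modules N_l exist, and H(N_l,t) = t^l/(1-t)^l *)
  (forall l : nat, (l <= n)%N ->
     exists N : gmod K n,
       [/\ fg_squarefree N,
           (forall a : 'X_{1..n},
              has_dimK (gm_comp N a) (msupport a == [set i : 'I_n | (i < l)%N] : nat)) &
           (forall i, hilbS R N i = geomS R l i)])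
  /\
  (* the cone is spanned by the H(N_l), 0 <= l <= n ... *)
  (forall f : series R,
     in_sqf_cone K n f <->
     exists c : 'I_n.+1 -> R,
       (forall l, 0 <= c l) /\ (forall i, f i = \sum_(l < n.+1) c l * geomS R l i))
  /\
  (* ... and these n+1 series are linearly independent (the cone is simplicial) *)
  (forall c : 'I_n.+1 -> R,
     (forall i, \sum_(l < n.+1) c l * geomS R l i = 0) -> forall l, c l = 0).
Proof.
split; first by move=> M hM i; exact: part1.
split.
  move=> l lln; exists (NN K lln); split.
  - exact: N_fg_sqf.
  - move=> a; exact: N_dim.
  - move=> i; exact: hilbS_N.
split.
  move=> f; split.
  - case=> k [c [Ms [c0 hM hf]]].
    exists (fun l : 'I_n.+1 => \sum_(j < k) c j * \sum_(s : {set 'I_n} | #|s| == l) (dimc (Ms j) (indic s))%:R).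
    split.
      move=> l; apply: sumr_ge0 => j _; apply: mulr_ge0 => //.
      by apply: sumr_ge0 => s _; exact: ler0n.
    move=> i; rewrite hf.
    rewrite (eq_bigr (fun j => \sum_(l < n.+1) c j * ((\sum_(s : {set 'I_n} | #|s| == l)
        (dimc (Ms j) (indic s))%:R) * geomS R l i))); last first.
      by move=> j _; rewrite (part1 _ (hM j)) (regroup (fun s => (dimc (Ms j) (indic s))%:R) (fun k => geomS R k i)) mulr_sumr.
    rewrite exchange_big /=; apply: eq_bigr => l _; rewrite mulr_suml; apply: eq_bigr => j _.
    by rewrite mulrA.
  - case=> c [c0 hf]; exists n.+1, c, (fun l : 'I_n.+1 => NN K (ltn_ord l : (l <= n)%N)).
    split => // [l|i]; first exact: N_fg_sqf.
    by rewrite hf; apply: eq_bigr => l _; rewrite hilbS_N.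
move=> c hc.
suff h : forall m (l : 'I_n.+1), (l < m)%N -> c l = 0 by move=> l; apply: (h l.+1).
elim=> [//|m IH] l hl.
have := hc l; rewrite (bigD1 l) //= big1 ?addr0 ?geomS_diag ?mulr1 // => l0 hl0.
case: (ltnP l0 l) => h.
  by rewrite IH ?mul0r //; apply: (leq_trans h).
rewrite geomS_lt ?mulr0 //; rewrite ltn_neqAle h andbT.
by apply: contra hl0 => /eqP e; apply/eqP/val_inj.
Qed.
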